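(* Let $\mathbf{V}_1,\dots,\mathbf{V}_L\in\mathbb{R}^{1\times d}$ be value vectors and $\mathbf{y}$ a target embedding. Let $H$ be the Hessian of the objective of the linear coding problem $\min_\alpha\|\sum_{j=1}^L\alpha_j\mathbf{V}_j-\mathbf{y}\|_2^2$ (subject to $\sum_j\alpha_j=1,\ \alpha_j>0$), and let $\bar H$ be the Hessian of the objective of the group coding problem $\min_{\bar\alpha}\|\sum_{g=1}^k\frac{\bar\alpha_g}{|G_g|}\sum_{j\in G_g}\mathbf{V}_j-\mathbf{y}\|_2^2$ (subject to $\sum_g\bar\alpha_g=1,\ \bar\alpha_g>0$), where $G_1,\dots,G_k$ partition $\{1,\dots,L\}$ and each group has size $|G_g|=m$. For a matrix $A$ let $\kappa(A)=\lambda_{\max}(A)/\lambda_{\min}(A)$ be its condition number, with $\lambda_{\max},\lambda_{\min}$ its maximum and minimum eigenvalues. If $\lambda_{\min}(H)>0$ and $\lambda_{\min}(\bar H)>0$, then $\kappa(\bar H)\le\kappa(H)$. *)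

(* Defs.v *)
From HB Require Import structures.
From mathcomp Require Import all_boot all_order all_algebra.
From mathcomp Require Import all_classical all_reals all_analysis.
Set Implicit Arguments. Unset Strict Implicit. Unset Printing Implicit Defensive.
Import Order.TTheory GRing.Theory Num.Theory.
Import numFieldNormedType.Exports.
Local Open Scope classical_set_scope.
Local Open Scope ring_scope.

Definition sqnorm2 (R : realType) (d : nat) (w : 'rV[R]_d) : R :=
  \sum_(i < d) (w 0 i) ^+ 2.

Definition lin_obj (R : realType) (L d : nat) (V : 'I_L -> 'rV[R]_d)
  (y : 'rV[R]_d) (alpha : 'rV[R]_L) : R :=
  sqnorm2 (\sum_(j < L) alpha 0 j *: V j - y).

Definition group_obj (R : realType) (L k d : nat) (m : nat) (grp : 'I_L -> 'I_k)
  (V : 'I_L -> 'rV[R]_d) (y : 'rV[R]_d) (abar : 'rV[R]_k) : R :=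
  sqnorm2 (\sum_(g < k) (abar 0 g / m%:R) *: \sum_(j < L | grp j == g) V j - y).

Definition hessian (R : realType) (n : nat) (f : 'rV[R]_n -> R) (a : 'rV[R]_n)
  : 'M[R]_n :=
  \matrix_(i < n, j < n)
    ('D_(delta_mx 0 i) (fun x => 'D_(delta_mx 0 j) f x) a).

(* largest / smallest eigenvalue (of a real symmetric matrix, whose
   eigenvalues are all real) *)
Definition lambda_max (R : realType) (n : nat) (A : 'M[R]_n) : R :=
  sup [set a : R | eigenvalue A a].
Definition lambda_min (R : realType) (n : nat) (A : 'M[R]_n) : R :=
  inf [set a : R | eigenvalue A a].

Definition kappa (R : realType) (n : nat) (A : 'M[R]_n) : R :=
  lambda_max A / lambda_min A.

(* Main.v *)
Require Import Defs.
From HB Require Import structures.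
From mathcomp Require Import all_boot all_order all_algebra.
From mathcomp Require Import all_classical all_reals all_analysis.
From mathcomp Require Import ring lra.
Import Order.TTheory GRing.Theory Num.Theory.
Import numFieldNormedType.Exports.
Local Open Scope ring_scope.
Set Implicit Arguments. Unset Strict Implicit.
Section QD.
Local Open Scope classical_set_scope.

Lemma quad_derive (R : realType) n (f : 'rV[R]_n -> R) (a v : 'rV[R]_n) (c e0 : R) :
  (forall h : R, f (h *: v + a) = f a + h * c + h ^+ 2 * e0) -> 'D_v f a = c.
Proof.
move=> hf; rewrite /derive.
apply: cvg_lim => //.
have : (fun h : R => c + h * e0) @ (0:R)^' --> c.
  apply: cvg_within_filter.
  suff : (fun h : R => c + h * e0) @ (0:R) --> c + 0 * e0 by rewrite mul0r addr0.
  apply: cvgD; first exact: cvg_cst.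
  apply: cvgMl; exact: cvg_id.
apply: cvg_trans; apply: near_eq_cvg; near=> h.
have h0 : h != 0 by near: h; exact: nbhs_dnbhs_neq.
rewrite /= hf /=.
have -> : f a + h * c + h ^+ 2 * e0 - f a = h * (c + h * e0) by ring.
by rewrite scalerA mulVf // scale1r.
Unshelve. all: by end_near.
Qed.

End QD.

Section Hess.
Variables (R : realType) (n d : nat) (X : 'I_n -> 'rV[R]_d) (y : 'rV[R]_d).

Definition dotv (u w : 'rV[R]_d) : R := \sum_(t < d) u 0 t * w 0 t.
Definition Sx (x : 'rV[R]_n) : 'rV[R]_d := \sum_(j < n) x 0 j *: X j.
Definition fobj (x : 'rV[R]_n) : R := sqnorm2 (Sx x - y).

Lemma sqnorm2_add (r s : 'rV[R]_d) (h : R) :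
  sqnorm2 (h *: s + r) = sqnorm2 r + h * (2 * dotv s r) + h ^+ 2 * sqnorm2 s.
Proof.
rewrite /sqnorm2 /dotv !mulr_sumr -!big_split /=.
by apply: eq_bigr => t _; rewrite !mxE; ring.
Qed.

Lemma Sx_lin (h : R) (v a : 'rV[R]_n) : Sx (h *: v + a) = h *: Sx v + Sx a.
Proof.
rewrite /Sx scaler_sumr -big_split /=; apply: eq_bigr => j _.
by rewrite !mxE scalerDl scalerA.
Qed.

Lemma Sx_delta (j : 'I_n) : Sx (delta_mx 0 j) = X j.
Proof.
rewrite /Sx (bigD1 j) //= big1 ?addr0; first by rewrite mxE !eqxx scale1r.
move=> l lj; rewrite mxE eqxx /=; case: eqP => [e|_]; last by rewrite scale0r.
by rewrite e eqxx in lj.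
Qed.

Lemma dotvDr (u a b : 'rV[R]_d) (h : R) : dotv u (h *: a + b) = h * dotv u a + dotv u b.
Proof.
rewrite /dotv mulr_sumr -big_split /=; apply: eq_bigr => t _; rewrite !mxE; ring.
Qed.

Lemma D1 (v a : 'rV[R]_n) : 'D_v fobj a = 2 * dotv (Sx v) (Sx a - y).
Proof.
apply: (@quad_derive R n fobj a v _ (sqnorm2 (Sx v))) => h; rewrite /fobj Sx_lin -addrA sqnorm2_add; ring.
Qed.

Lemma hessE (a : 'rV[R]_n) :
  hessian fobj a = \matrix_(i, j) (2 * dotv (X j) (X i)).
Proof.
apply/matrixP => i j; rewrite !mxE.
have -> : (fun x => 'D_(delta_mx 0 j) fobj x) = fun x => 2 * dotv (X j) (Sx x - y).
  by apply/funext => x; rewrite D1 Sx_delta.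
apply: (@quad_derive R n _ a _ _ 0) => h.
rewrite Sx_lin Sx_delta -addrA dotvDr; ring.
Qed.
End Hess.

Section Spec.
Local Open Scope classical_set_scope.
Variables (R : realType) (n : nat).
Implicit Types (A B M : 'M[R]_n) (u v w : 'rV[R]_n).

Definition bil M u v : R := (u *m M *m v^T) 0 0.
Definition qf M v : R := bil M v v.
Definition Kb M : R := \sum_i \sum_j `|M i j|.

Lemma sqnE v : sqnorm2 v = (v *m v^T) 0 0.
Proof. by rewrite /sqnorm2 mxE; apply: eq_bigr => i _; rewrite mxE expr2. Qed.

Lemma sqn_ge0 v : 0 <= sqnorm2 v.
Proof. by apply: sumr_ge0 => i _; exact: sqr_ge0. Qed.

Lemma coord_le v i : v 0 i ^+ 2 <= sqnorm2 v.
Proof.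
rewrite /sqnorm2 (bigD1 i) //= lerDl; apply: sumr_ge0 => j _; exact: sqr_ge0.
Qed.

Lemma sqn_gt0 v : v != 0 -> 0 < sqnorm2 v.
Proof.
move=> v0; rewrite lt_neqAle sqn_ge0 andbT; apply/negP => /eqP/esym.
rewrite /sqnorm2 => /eqP; rewrite psumr_eq0; last by move=> i _; exact: sqr_ge0.
move=> /allP H; move/negP: v0; apply; apply/eqP/rowP => i.
by have := H i (mem_index_enum _); rewrite /= sqrf_eq0 mxE => /eqP.
Qed.

Lemma bilE M u v : bil M u v = \sum_i \sum_j u 0 i * M i j * v 0 j.
Proof.
rewrite /bil mxE exchange_big /=; apply: eq_bigr => j _.
by rewrite !mxE big_distrl /=; apply: eq_bigr => i _.
Qed.

Lemma Kb_ge0 M : 0 <= Kb M.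
Proof. by apply: sumr_ge0 => i _; apply: sumr_ge0 => j _. Qed.

Lemma qf_bound M v : qf M v <= Kb M * sqnorm2 v.
Proof.
rewrite /qf bilE /Kb mulr_suml; apply: ler_sum => i _.
rewrite mulr_suml; apply: ler_sum => j _.
apply: le_trans (ler_norm _) _.
rewrite -mulrA [_ * v 0 j]mulrC mulrA !normrM -mulrA [`|v 0 j| * _]mulrC mulrA.
rewrite [`|v 0 i| * _]mulrC -mulrA; apply: ler_wpM2l => //.
have H k : `|v 0 k| ^+ 2 <= sqnorm2 v by rewrite real_normK ?num_real // coord_le.
have [le|le] := leP `|v 0 i| `|v 0 j|.
  apply: le_trans (H j); rewrite expr2 mulrC; apply: ler_wpM2l => //.
apply: le_trans (H i); rewrite expr2; apply: ler_wpM2l => //; exact: ltW.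
Qed.

Lemma bil_sym M u v : M^T = M -> bil M v u = bil M u v.
Proof.
move=> sM; have Ms i j : M j i = M i j by rewrite -{1}sM mxE.
rewrite !bilE exchange_big /=; apply: eq_bigr => i _; apply: eq_bigr => j _.
by rewrite Ms; ring.
Qed.

Lemma qf_add M u v t : M^T = M ->
  qf M (u + t *: v) = qf M u + 2 * t * bil M u v + t ^+ 2 * qf M v.
Proof.
move=> sM.
have -> : 2 * t * bil M u v = t * bil M u v + t * bil M v u.
  by rewrite bil_sym //; ring.
rewrite /qf !bilE !mulr_sumr -!big_split /=; apply: eq_bigr => i _.
rewrite !mulr_sumr -!big_split /=; apply: eq_bigr => j _.
rewrite !mxE; ring.
Qed.

Lemma eigen_qf M v mu : v *m M = mu *: v -> qf M v = mu * sqnorm2 v.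
Proof.
by move=> e; rewrite /qf /bil e -scalemxAl mxE sqnE.
Qed.

Lemma CS M u v : M^T = M -> (forall w, 0 <= qf M w) ->
  bil M u v ^+ 2 <= qf M u * qf M v.
Proof.
move=> sM psd.
set a := qf M u; set b := bil M u v; set c := qf M v.
have H t : 0 <= a + 2 * t * b + t ^+ 2 * c by rewrite /a /b /c -qf_add.
have c0 : 0 <= c by exact: psd.
have [cz|cp] := eqVneq c 0.
  have b0 : b = 0.
    apply/eqP; apply/negP => bn.
    have := H (- (a + 1) / (2 * b)); rewrite cz.
    have -> : a + 2 * (- (a + 1) / (2 * b)) * b + (- (a + 1) / (2 * b)) ^+ 2 * 0 = -1.
      by field; move/negP: bn.
    lra.
  by rewrite b0 cz expr0n /= mulr0.
have cpos : 0 < c by rewrite lt_neqAle eq_sym cp c0.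
have := H (- b / c).
have -> : a + 2 * (- b / c) * b + (- b / c) ^+ 2 * c = a - b ^+ 2 / c.
  by field.
by rewrite subr_ge0 ler_pdivrMr // mulrC.
Qed.

Lemma top_eig A : A^T = A -> (0 < n)%N ->
  exists lam, eigenvalue A lam /\ forall v, qf A v <= lam * sqnorm2 v.
Proof.
move=> sA n0.
pose Q := [set r : R | exists2 v : 'rV[R]_n, v != 0 & r = qf A v / sqnorm2 v].
have Qne : Q !=set0.
  pose c1 : 'rV[R]_n := const_mx 1.
  exists (qf A c1 / sqnorm2 c1); exists c1 => //.
  apply/negP => /eqP/rowP/(_ (Ordinal n0)); rewrite !mxE => /eqP; by rewrite oner_eq0.
have Qub : ubound Q (Kb A).
  move=> r [v v0 ->]; rewrite ler_pdivrMr ?sqn_gt0 //; exact: qf_bound.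
have hsQ : has_sup Q by split => //; exists (Kb A).
set lam := sup Q.
have bnd v : qf A v <= lam * sqnorm2 v.
  have [->|v0] := eqVneq v 0.
    by rewrite /qf /bil !mul0mx mxE /sqnorm2 big1 ?mulr0 // => i _; rewrite mxE expr0n.
  rewrite -ler_pdivrMr ?sqn_gt0 //; apply: sup_upper_bound => //; by exists v.
exists lam; split => //.
pose B := lam%:M - A.
have sB : B^T = B by rewrite /B linearB /= tr_scalar_mx sA.
have qB v : qf B v = lam * sqnorm2 v - qf A v.
  by rewrite /qf /bil mulmxBr mulmxBl mul_mx_scalar -scalemxAl sqnE mxE [in X in X + _]mxE [in X in _ + X]mxE.
have psd v : 0 <= qf B v by rewrite qB subr_ge0.
have nu : B \notin unitmx.
  apply/negP => Bu.
  pose Bi := invmx B.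
  pose K := Kb Bi^T.
  have key v : v != 0 -> sqnorm2 v <= K * qf B v.
    move=> v0; pose u := v *m Bi.
    have e1 : bil B u v = sqnorm2 v by rewrite /bil /u -(mulmxA v) mulVmx // mulmx1 sqnE.
    have e2 : qf B u = qf Bi^T v.
      by rewrite /qf /bil /u -(mulmxA v) mulVmx // mulmx1 trmx_mul mulmxA.
    have := @CS B u v sB psd; rewrite e1 e2 => h.
    have h2 := qf_bound Bi^T v.
    have sp := sqn_gt0 v0.
    have pB := psd v.
    have : sqnorm2 v ^+ 2 <= K * sqnorm2 v * qf B v.
      apply: le_trans h _; apply: ler_wpM2r => //.
    by rewrite expr2 [K * _]mulrC -mulrA ler_pM2l.
  have Kp : 0 < K.
    have v0 : (const_mx 1 : 'rV[R]_n) != 0.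
      apply/negP => /eqP/rowP/(_ (Ordinal n0)); rewrite !mxE => /eqP; by rewrite oner_eq0.
    have := key _ v0; have := sqn_gt0 v0; have := Kb_ge0 Bi^T; rewrite -/K.
    have := psd (const_mx 1).
    move=> h1 h2 h3 h4; rewrite lt_neqAle h2 andbT; apply/negP => /eqP K0.
    by move: h4; rewrite -K0 mul0r; lra.
  have : lam <= lam - K^-1.
    apply: ge_sup => // r [v v0 ->].
    rewrite ler_pdivrMr ?sqn_gt0 //.
    have := key v v0; rewrite qB => h.
    have sp := sqn_gt0 v0.
    have : sqnorm2 v / K <= lam * sqnorm2 v - qf A v by rewrite ler_pdivrMr // mulrC.
    rewrite mulrBl mulrC; lra.
  have : 0 < K^-1 by rewrite invr_gt0.
  lra.
have : \det B == 0 by move: nu; rewrite unitmxE unitfE negbK.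
case/det0P => w w0 wB.
apply/eigenvalueP; exists w => //.
by move/eqP: wB; rewrite /B mulmxBr mul_mx_scalar subr_eq0 => /eqP <-.
Qed.
End Spec.

Section Lam.
Local Open Scope classical_set_scope.
Variables (R : realType) (n : nat).
Implicit Types (A : 'M[R]_n) (v : 'rV[R]_n).

Lemma sup_eq_max (S : set R) x : S x -> ubound S x -> sup S = x.
Proof.
move=> Sx ub; apply/eqP; rewrite eq_le; apply/andP; split.
  by apply: ge_sup => //; exists x.
by apply: sup_upper_bound => //; split; [exists x | exists x].
Qed.

Lemma eig_le A lam mu : (forall v, qf A v <= lam * sqnorm2 v) ->
  eigenvalue A mu -> mu <= lam.
Proof.
move=> b /eigenvalueP [w wA w0].
have := b w; rewrite (eigen_qf wA) ler_pM2r //; exact: sqn_gt0.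
Qed.

Lemma eig_ge A lam mu : (forall v, lam * sqnorm2 v <= qf A v) ->
  eigenvalue A mu -> lam <= mu.
Proof.
move=> b /eigenvalueP [w wA w0].
have := b w; rewrite (eigen_qf wA) ler_pM2r //; exact: sqn_gt0.
Qed.

Lemma lmax_eq A lam : eigenvalue A lam -> (forall v, qf A v <= lam * sqnorm2 v) ->
  lambda_max A = lam.
Proof.
move=> e b; apply: sup_eq_max => // mu; exact: eig_le.
Qed.

Lemma lmin_eq A lam : eigenvalue A lam -> (forall v, lam * sqnorm2 v <= qf A v) ->
  lambda_min A = lam.
Proof.
move=> e b; rewrite /lambda_min /inf (@sup_eq_max _ (- lam)) ?opprK //.
  by exists lam.
move=> _ [mu emu <-]; rewrite lerN2; exact: eig_ge emu.
Qed.

Lemma qfN A v : qf (- A) v = - qf A v.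
Proof. by rewrite /qf /bil mulmxN mulNmx mxE. Qed.

Lemma eigN A a : eigenvalue (- A) a -> eigenvalue A (- a).
Proof.
move=> /eigenvalueP [w wA w0]; apply/eigenvalueP; exists w => //.
by move: wA; rewrite mulmxN scaleNr => /eqP; rewrite eqr_oppLR => /eqP.
Qed.

Lemma spectral_bounds A : A^T = A -> (0 < n)%N ->
  (forall v, qf A v <= lambda_max A * sqnorm2 v) /\
  (forall v, lambda_min A * sqnorm2 v <= qf A v) /\
  eigenvalue A (lambda_max A) /\ eigenvalue A (lambda_min A).
Proof.
move=> sA n0.
have [l1 [e1 b1]] := top_eig sA n0.
have sN : (- A)^T = - A by rewrite linearN /= sA.
have [l2 [e2 b2]] := top_eig sN n0.
have b2' v : - l2 * sqnorm2 v <= qf A v.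
  by have := b2 v; rewrite qfN mulNr lerNl.
rewrite (lmax_eq e1 b1) (lmin_eq (eigN e2) b2').
by do 3?split => //; exact: eigN.
Qed.

Lemma lmin_pos_n A : 0 < lambda_min A -> (0 < n)%N.
Proof.
case: n A => // A; rewrite /lambda_min.
have -> : [set a : R | eigenvalue A a] = set0.
  apply/seteqP; split => // a /= /eigenvalueP [w _ w0].
  by rewrite thinmx0 eqxx in w0.
by rewrite inf0 ltxx.
Qed.
End Lam.

Section Gram.
Variables (R : realType) (n d : nat) (X : 'I_n -> 'rV[R]_d).
Definition gram : 'M[R]_n := \matrix_(i, j) (2 * dotv (X j) (X i)).

Lemma gram_sym : gram^T = gram.
Proof.
apply/matrixP => i j; rewrite !mxE /dotv; congr (_ * _).
by apply: eq_bigr => t _; rewrite mulrC.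
Qed.

Lemma qf_gram u : qf gram u = 2 * sqnorm2 (Sx X u).
Proof.
rewrite /qf bilE /sqnorm2 /Sx mulr_sumr.
under [RHS]eq_bigr => t _ do rewrite summxE expr2 big_distrl /= mulr_sumr.
rewrite [RHS]exchange_big /=; apply: eq_bigr => i _.
under [RHS]eq_bigr => t _ do rewrite big_distrr /= mulr_sumr.
rewrite [RHS]exchange_big /=; apply: eq_bigr => j _.
rewrite !mxE /dotv mulrA [u 0 i * 2]mulrC -mulrA -mulrA mulr_suml mulr_sumr mulr_sumr; apply: eq_bigr => t _.
rewrite !mxE; ring.
Qed.
End Gram.

Lemma sqnZ (R : realType) d (c : R) (r : 'rV[R]_d) : sqnorm2 (c *: r) = c ^+ 2 * sqnorm2 r.
Proof. by rewrite /sqnorm2 mulr_sumr; apply: eq_bigr => t _; rewrite mxE exprMn. Qed.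

Theorem theorem3 (R : realType) (L d k m : nat)
  (V : 'I_L -> 'rV[R]_d) (y : 'rV[R]_d)
  (grp : 'I_L -> 'I_k)
  (hgrp : forall g : 'I_k, #|[set j | grp j == g]| = m)
  (alpha : 'rV[R]_L) (abar : 'rV[R]_k) :
  let H := hessian (lin_obj V y) alpha in
  let Hbar := hessian (group_obj m grp V y) abar in
  0 < lambda_min H -> 0 < lambda_min Hbar ->
  kappa Hbar <= kappa H.
Proof.
move=> H Hbar hH hHb.
have eH : H = gram V by rewrite /H (_ : lin_obj V y = fobj V y) // hessE.
pose Xg (g : 'I_k) := (m%:R : R)^-1 *: \sum_(j < L | grp j == g) V j.
have eG : group_obj m grp V y = fobj Xg y.
  apply/funext => b; rewrite /group_obj /fobj /Sx; congr (sqnorm2 (_ - y)).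
  by apply: eq_bigr => g _; rewrite /Xg scalerA.
have eHb : Hbar = gram Xg by rewrite /Hbar eG hessE.
have L0 := lmin_pos_n hH.
have k0 := lmin_pos_n hHb.
have m0 : (0 < m)%N.
  rewrite -(hgrp (grp (Ordinal L0))); apply/card_gt0P; exists (Ordinal L0).
  by rewrite !inE.
rewrite eH in hH *; rewrite eHb in hHb *.
have [b1 [b2 [e1 e2]]] := spectral_bounds (gram_sym V) L0.
have [_ [_ [e1b e2b]]] := spectral_bounds (gram_sym Xg) k0.
set l1 := lambda_max (gram V) in b1 e1 *.
set l2 := lambda_min (gram V) in b2 e2 hH *.
set mu1 := lambda_max (gram Xg) in e1b *.
set mu2 := lambda_min (gram Xg) in e2b hHb *.
have key (u : 'rV[R]_k) : exists w : 'rV[R]_L,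
    qf (gram Xg) u = (m%:R)^-2 * qf (gram V) w /\ sqnorm2 w = m%:R * sqnorm2 u.
  exists (\row_j u 0 (grp j)); split.
    rewrite !qf_gram.
    have -> : Sx Xg u = (m%:R)^-1 *: Sx V (\row_j u 0 (grp j)).
      rewrite /Sx /Xg [in RHS]scaler_sumr.
      rewrite [in RHS](partition_big grp xpredT) //=; apply: eq_bigr => g _.
      by rewrite !scaler_sumr; apply: eq_bigr => j /eqP <-; rewrite mxE !scalerA mulrC.
    by rewrite sqnZ exprVn; ring.
  rewrite /sqnorm2 (partition_big grp xpredT) //= mulr_sumr; apply: eq_bigr => g _.
  rewrite (eq_bigr (fun _ => u 0 g ^+ 2)); last by move=> j /eqP <-; rewrite mxE.
  rewrite (eq_bigl (fun j => j \in [set j | grp j == g])); last by move=> j; rewrite inE.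
  by rewrite sumr_const hgrp mulr_natl.
have ub : forall u, qf (gram Xg) u <= l1 / m%:R * sqnorm2 u.
  move=> u; have [w [-> ew]] := key u.
  have := b1 w; rewrite ew => h.
  have mi : 0 < (m%:R : R)^-2 by rewrite invr_gt0 exprn_gt0 // ltr0n.
  rewrite -(ler_pM2l mi) in h; apply: le_trans h _.
  rewrite le_eqVlt; apply/orP; left; apply/eqP; field.
  by rewrite pnatr_eq0 -lt0n.
have lb : forall u, l2 / m%:R * sqnorm2 u <= qf (gram Xg) u.
  move=> u; have [w [-> ew]] := key u.
  have := b2 w; rewrite ew => h.
  have mi : 0 < (m%:R : R)^-2 by rewrite invr_gt0 exprn_gt0 // ltr0n.
  rewrite -(ler_pM2l mi) in h; apply: le_trans h.
  rewrite le_eqVlt; apply/orP; left; apply/eqP; field.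
  by rewrite pnatr_eq0 -lt0n.
have h1 := eig_le ub e1b.
have h2 := eig_ge lb e2b.
have h12 : l2 <= l1 := eig_le b1 e2.
rewrite /kappa -/l1 -/l2 -/mu1 -/mu2.
rewrite ler_pdivrMr // mulrAC ler_pdivlMr //.
set p := l1 / m%:R in h1; set q := l2 / m%:R in h2.
have pq : p * l2 = l1 * q by rewrite /p /q; field; rewrite pnatr_eq0 -lt0n.
nra.
Qed.
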